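(* Let $T$ be a tree and $S\subseteq E(T)$. Then \[ d(T\setminus S,X)=\sum_{\mu\in\mathcal{V}_1(S)} d(T\setminus V(\mu),X), \] where $\mathcal{V}_1(S)$ is the set of matchings (including the empty matching) of the subgraph of $T$ formed by the edges in $S$.
   Context: For a graph $G$ with vertex set $V$, $L(G,X_G)$ is the matrix indexed by $V$ with diagonal entries $x_u$ and off-diagonal entries $-m_{uv}$ ($m_{uv}$ the number of edges between $u$ and $v$), and $d(G,X)=\det L(G,X_G)$ (equal to $1$ for the graph with no vertices). $T\setminus S$ denotes $T$ with the edges in $S$ deleted (all vertices kept); $T\setminus V(\mu)$ denotes $T$ with the vertices covered by $\mu$ (and their incident edges) deleted. A matching is a set of pairwise vertex-disjoint edges. *)

(* Defs.v *)
From mathcomp Require Import all_boot all_order all_algebra.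
Set Implicit Arguments. Unset Strict Implicit. Unset Printing Implicit Defensive.
Import GRing.Theory.
Local Open Scope ring_scope.

Definition simple_graph (V : finType) (e : rel V) : Prop :=
  symmetric e /\ irreflexive e.

Definition connected_graph (V : finType) (e : rel V) : Prop :=
  forall u v : V, connect e u v.

(* A cycle: distinct vertices u :: p (at least 3), consecutive ones adjacent,
   and the last adjacent to u. *)
Definition acyclic_graph (V : finType) (e : rel V) : Prop :=
  forall (u : V) (p : seq V),
    uniq (u :: p) -> (2 <= size p)%N -> path e u p -> ~~ e (last u p) u.

Definition is_tree (V : finType) (e : rel V) : Prop :=
  [/\ simple_graph e, connected_graph e & acyclic_graph e].

Definition edge_set (V : finType) (e : rel V) : {set {set V}} :=
  [set E : {set V} | [exists u, exists v, e u v && (E == [set u; v])]].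

Definition del_edges (V : finType) (e : rel V) (S : {set {set V}}) : rel V :=
  fun u v => e u v && ([set u; v] \notin S).

Definition is_matching (V : finType) (S mu : {set {set V}}) : bool :=
  (mu \subset S) && trivIset mu.

(* L(G, X_G): diagonal x_u, off-diagonal -m_uv (m_uv in {0,1} for simple graphs). *)
Definition Lmat (R : comRingType) (V : finType) (e : rel V) (x : V -> R)
  (u v : V) : R :=
  if u == v then x u else - (e u v)%:R.

(* d(G, X) for the graph induced by e on the vertex set A:
   det of L restricted to A (equal to 1 when A is empty). *)
Definition dpoly (R : comRingType) (V : finType) (e : rel V) (x : V -> R)
  (A : {set V}) : R :=
  \det (\matrix_(i < #|A|, j < #|A|)
          Lmat e x (enum_val i) (enum_val j)).

(* Main.v *)
Require Import Defs.
From mathcomp Require Import all_boot all_order all_algebra all_fingroup.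
Set Implicit Arguments. Unset Strict Implicit. Unset Printing Implicit Defensive.
Import GRing.Theory.
Local Open Scope ring_scope.

Section Conv.
Variables (R : comRingType) (V : finType) (x : V -> R).

Definition Dp (f : rel V) (A : {set V}) : R :=
  \sum_(s : {perm V} | perm_on A s) (-1) ^+ s * \prod_(y in A) Lmat f x y (s y).

Section Emb.
Variables (A : {set V}) (x0 : V) (x0A : x0 \in A).
Let n := #|A|.
Let g : 'I_n -> V := enum_val.
Let r : V -> 'I_n := enum_rank_in x0A.

Lemma gK : cancel g r. Proof. exact: enum_valK_in. Qed.
Lemma rK : {in A, cancel r g}. Proof. exact: enum_rankK_in. Qed.
Lemma gA i : g i \in A. Proof. exact: enum_valP. Qed.
Lemma g_inj : injective g. Proof. exact: enum_val_inj. Qed.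

Definition hf (s : 'S_n) (y : V) := if y \in A then g (s (r y)) else y.

Lemma hf_inj s : injective (hf s).
Proof.
move=> y1 y2; rewrite /hf.
case: ifP => h1; case: ifP => h2.
- by move/g_inj/perm_inj => e; rewrite -(rK h1) -(rK h2) e.
- by move=> e; move: h2; rewrite -e gA.
- by move=> e; move: h1; rewrite e gA.
- by [].
Qed.

Definition hp s : {perm V} := perm (@hf_inj s).

Lemma hpE s i : hp s (g i) = g (s i).
Proof. by rewrite permE /hf gA gK. Qed.

Lemma hp_out s y : y \notin A -> hp s y = y.
Proof. by rewrite permE /hf => /negbTE ->. Qed.

Lemma hp_on s : perm_on A (hp s).
Proof.
apply/subsetP => y; rewrite inE; apply: contraR => yA.
by rewrite hp_out ?eqxx.
Qed.

Lemma hpM s t : hp (s * t)%g = (hp s * hp t)%g.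
Proof.
apply/permP => y; rewrite permM.
case: (boolP (y \in A)) => yA; last by rewrite !hp_out.
by rewrite -(rK yA) !hpE permM.
Qed.

Lemma hp1 : hp 1%g = 1%g.
Proof.
apply/permP => y; rewrite perm1.
case: (boolP (y \in A)) => yA; last by rewrite !hp_out.
by rewrite -(rK yA) !hpE perm1.
Qed.

Lemma hpT i j : hp (tperm i j) = tperm (g i) (g j).
Proof.
apply/permP => y.
case: (boolP (y \in A)) => yA.
  by rewrite -(rK yA) !hpE; apply: inj_tperm; exact: g_inj.
rewrite hp_out // tpermD //; apply: contraNneq yA => <-; exact: gA.
Qed.

Lemma hp_odd s : odd_perm (hp s) = odd_perm s.
Proof.
case: (prod_tpermP s) => ts -> dts.
have -> : hp (\prod_(t <- ts) tperm t.1 t.2)%g =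
   (\prod_(t <- map (fun t => (g t.1, g t.2)) ts) tperm t.1 t.2)%g.
  elim: ts {dts} => [|t ts IH]; first by rewrite !big_nil hp1.
  by rewrite /= !big_cons hpM IH hpT.
rewrite !odd_perm_prod ?size_map //.
by rewrite all_map; apply: sub_all dts => t; rewrite /= (inj_eq g_inj).
Qed.

Definition hf' (s : {perm V}) (i : 'I_n) := r (s (g i)).

Lemma hf'_inj s : perm_on A s -> injective (hf' s).
Proof.
move=> ps i j; rewrite /hf' => e.
have := congr1 g e; rewrite !rK ?(perm_closed _ ps) ?gA //.
by move/perm_inj/g_inj.
Qed.

Definition hp' (s : {perm V}) : 'S_n :=
  if injectiveP (hf' s) is ReflectT inj then perm inj else 1%g.

Lemma hp'E s : perm_on A s -> forall i, hp' s i = r (s (g i)).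
Proof.
move=> ps i; rewrite /hp'; case: injectiveP => [inj|ninj]; first by rewrite permE.
by case: (ninj (hf'_inj ps)).
Qed.

Lemma hp_bij : {on [pred s | perm_on A s], bijective hp}.
Proof.
exists hp' => [s _|s /= ps].
  apply/permP => i; rewrite hp'E ?hp_on // hpE gK //.
apply/permP => y; case: (boolP (y \in A)) => yA.
  by rewrite -(rK yA) hpE hp'E // rK // (perm_closed _ ps) gA.
by rewrite hp_out // (out_perm ps).
Qed.

End Emb.

Lemma dpolyE f A : dpoly f x A = Dp f A.
Proof.
rewrite /dpoly /Dp.
case: (set_0Vmem A) => [A0|[x0 x0A]].
  subst A. rewrite (big_pred1 1%g) ?big_set0 ?odd_perm1 ?mulr1 //.
    by move: (\matrix_(i, j) _); rewrite cards0 => M; exact: det_mx00.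
  move=> s /=; apply/idP/eqP => [ps|->]; last exact: perm_on1.
  by apply: (perm_on_id ps); rewrite cards0.
rewrite (reindex (hp x0A)); last exact: hp_bij.
rewrite [in RHS](eq_bigl predT); last by move=> s; rewrite hp_on.
apply: eq_bigr => s _; rewrite hp_odd; congr (_ * _).
rewrite [in RHS]big_enum_val; apply: eq_bigr => i _.
by rewrite mxE hpE.
Qed.

End Conv.

Section Cyc.
Variables (V : finType) (f : rel V).
Hypothesis facyc : acyclic_graph f.

Lemma cyc (s : {perm V}) a b : a != b -> s a = b -> s b != a ->
  (forall y, s y != y -> f y (s y)) -> False.
Proof.
move=> ab sab sba mv.
have mvi : forall i, s (iter i s a) != iter i s a.
  move=> i; apply/eqP => E.
  have : ((s ^+ i)%g) (s a) = ((s ^+ i)%g) a by rewrite !permX -iterSr.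
  by move/perm_inj; rewrite sab; apply/eqP; rewrite eq_sym.
have U := uniq_traject_porbit s a. have I := iter_porbit s a.
have N := card_porbit_neq0 s a.
move: U I N; move: (#|porbit s a|) => k U I N.
have k3 : (2 < k)%N.
  move: I N; case: k {U} => [|[|[|k]]] //= .
  - by move=> E; move: ab; rewrite -sab E eqxx.
  - by move=> E; move: sba; rewrite -sab E eqxx.
case: k U I N k3 => // k U I _ k3.
have := facyc (p := traject s (s a) k) U.
rewrite size_traject last_traject => H.
have P : path f a (traject s (s a) k).
  apply: (@sub_in_path _ [pred y | s y != y] (frel s)).
  - by move=> y z Py _ /eqP <-; apply: mv.
  - apply/allP => y; rewrite -[a :: _]/(traject s a k.+1) => /trajectP [i _ ->]; apply: mvi.
  exact: fpath_traject.
move/negP: (H k3 P); apply.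
by have := mv _ (mvi k); rewrite -iterS I.
Qed.
End Cyc.

Section Bridge.
Variables (R : comRingType) (V : finType) (x : V -> R).
Variables (f f' : rel V) (u v : V) (A : {set V}).
Hypotheses (firr : irreflexive f) (facyc : acyclic_graph f) (fuv : f u v).
Hypothesis hf' : forall a b, f' a b = f a b && ([set a; b] != [set u; v]).
Hypotheses (uA : u \in A) (vA : v \in A).

Lemma uv : u != v.
Proof. by apply: contraTneq fuv => ->; rewrite firr. Qed.

Lemma set2_eq a b : a != b -> ([set a; b] == [set u; v]) =
   ((a == u) && (b == v)) || ((a == v) && (b == u)).
Proof.
move=> ab; apply/eqP/idP => [E|].
  have : a \in [set u; v] by rewrite -E !inE eqxx.
  have : b \in [set u; v] by rewrite -E !inE eqxx orbT.
  rewrite !inE => /orP [] /eqP ? /orP [] /eqP ?; subst; rewrite ?eqxx ?orbT //;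
    by rewrite eqxx in ab.
by case/orP => /andP [/eqP -> /eqP ->] //; rewrite setUC.
Qed.

Lemma Lmat_eq a b : ~~ (((a == u) && (b == v)) || ((a == v) && (b == u))) ->
  Lmat f x a b = Lmat f' x a b.
Proof.
move=> H; rewrite /Lmat; case: (a =P b) => // /eqP ab.
by rewrite hf' set2_eq // (negbTE H) andbT.
Qed.

Lemma Lmat'0 a b : ((a == u) && (b == v)) || ((a == v) && (b == u)) ->
  Lmat f' x a b = 0.
Proof.
move=> H; have ab : a != b.
  by case/orP: H => /andP [/eqP -> /eqP ->]; rewrite ?uv // eq_sym uv.
by rewrite /Lmat (negbTE ab) hf' set2_eq // H andbF oppr0.
Qed.

Lemma prod0 (g : rel V) (s : {perm V}) y : y \in A -> Lmat g x y (s y) = 0 ->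
  \prod_(z in A) Lmat g x z (s z) = 0.
Proof. by move=> yA E; rewrite (bigD1 y) //= E mul0r. Qed.

Lemma prodf0 (s : {perm V}) : perm_on A s ->
  ~~ [forall y, (s y != y) ==> f y (s y)] ->
  \prod_(z in A) Lmat f x z (s z) = 0.
Proof.
move=> ps /forallPn [y]; rewrite negb_imply => /andP [sy nf].
apply: (prod0 (y := y)).
  by apply: (subsetP ps); rewrite inE.
by rewrite /Lmat eq_sym (negbTE sy) (negbTE nf) oppr0.
Qed.

Lemma diff_eq :
  Dp x f A - Dp x f' A =
  \sum_(s : {perm V} | perm_on A s && ((s u == v) && (s v == u)))
     (-1) ^+ s * \prod_(y in A) Lmat f x y (s y).
Proof.
rewrite /Dp -sumrB big_mkcondr /=; apply: eq_bigr => s ps.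
case: ifP => [/andP [/eqP su /eqP sv]|H].
  rewrite (@prod0 f' s u) ?mulr0 ?subr0 //.
  by apply: Lmat'0; rewrite su !eqxx.
case: (boolP ((s u == v) || (s v == u))) => [H2|].
  rewrite (prodf0 ps); last first.
    apply/forallP => mv.
    have mv' : forall y, s y != y -> f y (s y) by move=> y; apply/implyP/mv.
    case/orP: H2 => /eqP E.
    - apply: (cyc facyc uv E _ mv'); apply: contraFneq H => ->.
      by rewrite E !eqxx.
    - apply: (cyc facyc (a := v) (b := u) _ E _ mv').
        by rewrite eq_sym uv.
      by apply: contraFneq H => ->; rewrite E !eqxx.
  case/orP: H2 => /eqP E.
  - by rewrite (@prod0 f' s u) ?mulr0 ?subrr // Lmat'0 // E !eqxx.
  - by rewrite (@prod0 f' s v) ?mulr0 ?subrr // Lmat'0 // E !eqxx orbT.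
rewrite negb_or => /andP [nu nv].
apply/eqP; rewrite subr_eq0; apply/eqP; congr (_ * _); apply: eq_bigr => y yA.
apply: Lmat_eq; apply/negP => /orP [] /andP [/eqP E1 /eqP E2]; subst y.
  by rewrite E2 eqxx in nu.
by rewrite E2 eqxx in nv.
Qed.

End Bridge.

Section Bridge2.
Variables (R : comRingType) (V : finType) (x : V -> R).
Variables (f : rel V) (u v : V) (A : {set V}).
Hypotheses (fsym : symmetric f) (uv : u != v) (fuv : f u v).
Hypotheses (uA : u \in A) (vA : v \in A).

Let t := tperm u v.

Lemma P_iff (s : {perm V}) :
  (perm_on A (s * t)%g && (((s * t)%g u == v) && ((s * t)%g v == u))) =
  perm_on (A :\ u :\ v) s.
Proof.
rewrite !permM /t.
apply/idP/idP.
- case/and3P => ps /eqP su /eqP sv.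
  have su' : s u = u by rewrite -[s u](tpermK u v) su tpermR.
  have sv' : s v = v by rewrite -[s v](tpermK u v) sv tpermL.
  apply/subsetP => y; rewrite !inE => sy.
  have yu : y != u by apply: contraNneq sy => ->; rewrite su' eqxx.
  have yv : y != v by apply: contraNneq sy => ->; rewrite sv' eqxx.
  rewrite yu yv /=; apply: (subsetP ps); rewrite inE permM.
  apply: contra sy => /eqP E; apply/eqP.
  by rewrite -[s y](tpermK u v) E tpermD // eq_sym.
- move=> ps.
  have su : s u = u by apply: (out_perm ps); rewrite !inE eqxx ?andbT ?andbF.
  have sv : s v = v by apply: (out_perm ps); rewrite !inE eqxx.
  rewrite su sv tpermL tpermR !eqxx !andbT.
  apply/subsetP => y; rewrite inE permM.
  case: (boolP (y \in A :\ u :\ v)) => [|yn]; first by rewrite !inE => /and3P [].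
  rewrite (out_perm ps yn).
  case: (tpermP u v y) => [->|->|]; rewrite ?eqxx //.
Qed.


Lemma swap_sum :
  \sum_(s : {perm V} | perm_on A s && ((s u == v) && (s v == u)))
     (-1) ^+ s * \prod_(y in A) Lmat f x y (s y) = - Dp x f (A :\ u :\ v).
Proof.
rewrite (reindex (fun s => (s * t)%g)); last first.
  by exists (fun s => (s * t)%g) => s _; rewrite -mulgA /t tperm2 mulg1.
rewrite /Dp -sumrN; apply: eq_big => [s|s]; first exact: P_iff.
rewrite P_iff => ps.
rewrite odd_permM /t odd_tperm uv signr_addb.
rewrite (bigD1 u) //= (bigD1 v) /=; last by rewrite vA eq_sym uv.
have su : s u = u by apply: (out_perm ps); rewrite !inE eqxx ?andbT ?andbF.
have sv : s v = v by apply: (out_perm ps); rewrite !inE eqxx.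
rewrite !permM su sv tpermL tpermR /Lmat (negbTE uv) eq_sym (negbTE uv) fuv fsym fuv.
rewrite mulrA mulrN1 mulNr mulN1r opprK mulrA.
rewrite mulr1n mulr1; congr (- (_ * _)).
apply: eq_big => [y|y]; first by rewrite !inE; case: (y \in A); case: (y == u); case: (y == v).
move=> /andP [/andP [yA yu] yv].
have sy : s y \in A :\ u :\ v by rewrite (perm_closed _ ps) !inE yv yu.
move: sy; rewrite !inE => /and3P [syv syu _].
by rewrite permM tpermD // eq_sym.
Qed.

Lemma bridge (f' : rel V) :
  irreflexive f -> acyclic_graph f ->
  (forall a b, f' a b = f a b && ([set a; b] != [set u; v])) ->
  Dp x f A = Dp x f' A - Dp x f (A :\ u :\ v).
Proof.
move=> firr facyc hf'.
have := diff_eq x firr facyc fuv hf' uA vA; rewrite swap_sum.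
by move=> E; rewrite -E addrC subrK.
Qed.

End Bridge2.

Section Match.
Variable V : finType.

Lemma match_ins (S mu : {set {set V}}) (s : {set V}) (u v : V) (A : {set V}) :
  s \in S -> s = [set u; v] -> set0 \notin S -> s \notin mu ->
  u \in A -> v \in A ->
  [&& s |: mu \subset S, trivIset (s |: mu) & cover (s |: mu) \subset A] =
  [&& mu \subset S :\ s, trivIset mu & cover mu \subset A :\ u :\ v].
Proof.
move=> sS s2 S0 smu uA vA.
rewrite /cover big_setU1 //=.
apply/idP/idP.
- case/and3P => sub tri cov.
  have musub : mu \subset S by apply: subset_trans sub; apply: subsetUr.
  rewrite [mu \subset _]subsetD1 musub smu (trivIsetS _ tri) ?subsetUr //=.
  apply/bigcupsP => B Bmu; apply/subsetP => y yB.
  have dj : [disjoint s & B].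
    apply: (trivIsetP tri); rewrite ?setU11 ?inE ?Bmu ?orbT //.
    by apply: contraNneq smu => ->.
  have yA : y \in A.
    by apply: (subsetP cov); rewrite inE; apply/orP; right; apply/bigcupP; exists B.
  rewrite !inE yA andbT; apply/andP; split.
  + by apply: contraTneq yB => ->; rewrite (disjointFr dj) // s2 !inE eqxx orbT.
  + by apply: contraTneq yB => ->; rewrite (disjointFr dj) // s2 !inE eqxx.
- case/and3P => sub tri cov.
  have musub : mu \subset S by move: sub; rewrite subsetD1 => /andP [].
  have [tri' _] : trivIset (s |: mu) /\ s \notin mu.
    apply: trivIsetU1 => //; last first.
      by apply: contra S0 => m0; apply: (subsetP musub).
    move=> B Bmu; rewrite -setI_eq0; apply/eqP/setP => y; rewrite !inE.
    apply/negbTE; apply/negP => /andP [ys yB].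
    have : y \in A :\ u :\ v.
      by apply: (subsetP cov); apply/bigcupP; exists B.
    by move: ys; rewrite s2 !inE => /orP [] /eqP ->; rewrite eqxx ?andbF.
  rewrite tri' /= [s |: mu \subset _]subUset sub1set sS musub /=.
  rewrite subUset; apply/andP; split; first by rewrite s2 subUset !sub1set uA vA.
  apply: subset_trans cov _; apply/subsetP => y; by rewrite !inE => /and3P [_ _ ->].
Qed.

End Match.

Section Main.
Variables (R : comRingType) (V : finType) (x : V -> R) (e : rel V).
Hypotheses (esym : symmetric e) (eirr : irreflexive e) (eacyc : acyclic_graph e).

Lemma Dp_ext_in (f g : rel V) (A : {set V}) :
  (forall a b, a \in A -> b \in A -> f a b = g a b) -> Dp x f A = Dp x g A.
Proof.
move=> E; apply: eq_bigr => s ps; congr (_ * _); apply: eq_bigr => y yA.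
by rewrite /Lmat E // (perm_closed _ ps).
Qed.

Lemma del_sym S : symmetric (del_edges e S).
Proof. by move=> a b; rewrite /del_edges esym setUC. Qed.

Lemma del_irr S : irreflexive (del_edges e S).
Proof. by move=> a; rewrite /del_edges eirr. Qed.

Lemma del_acyc S : acyclic_graph (del_edges e S).
Proof.
move=> u p U s2 P; apply: contraNN (eacyc U s2 _) => [/andP [] //|].
by apply: sub_path P => a b /andP [].
Qed.

Lemma set2_in (a b u v : V) : [set a; b] = [set u; v] -> (u == a) || (u == b).
Proof. move=> E; have : u \in [set a; b] by rewrite E !inE eqxx.
by rewrite !inE. Qed.

Lemma main_gen n : forall (S : {set {set V}}) (A : {set V}), (#|S| < n)%N -> S \subset edge_set e ->
  Dp x (del_edges e S) A =
  \sum_(mu | is_matching S mu && (cover mu \subset A)) Dp x e (A :\: cover mu).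
Proof.
elim: n => // n IH S A Sn Se.
case: (set_0Vmem S) => [S0|[s sS]].
  subst S; rewrite (big_pred1 set0); last first.
    move=> mu /=; rewrite /is_matching subset0; apply/idP/idP => [/andP [/andP [] //]|/eqP ->].
    rewrite eqxx /= /cover big_set0 sub0set andbT.
    by apply/trivIsetP => B; rewrite inE.
  rewrite /cover big_set0 setD0; apply: Dp_ext_in => a b _ _.
  by rewrite /del_edges inE andbT.
move: (subsetP Se s sS); rewrite inE => /existsP [u /existsP [v /andP [euv /eqP s2]]].
set S' := S :\ s.
have S'n : (#|S'| < n)%N by move: Sn; rewrite /S' (cardsD1 s S) sS.
have S'e : S' \subset edge_set e by apply: subset_trans Se; apply: subsetDl.
set H := del_edges e S'.
have hH : forall a b, del_edges e S a b = H a b && ([set a; b] != [set u; v]).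
  move=> a b; rewrite /H /del_edges /S' -s2 !inE.
  by case: ([set a; b] =P s) => [->|/eqP ns]; rewrite ?sS ?andbF ?ns ?andbT.
have S0 : set0 \notin S.
  apply/negP => /(subsetP Se); rewrite inE => /existsP [a /existsP [b /andP [_ /eqP E]]].
  have : a \in [set a; b] by rewrite !inE eqxx.
  by rewrite -E inE.
case: (boolP ((u \in A) && (v \in A))) => [/andP [uA vA]|nuv].
  have uv : u != v by apply: contraTneq euv => ->; rewrite eirr.
  have Huv : H u v by rewrite /H /del_edges euv /S' -s2 !inE eqxx.
  have := bridge x (@del_sym S') uv Huv uA vA (@del_irr S') (@del_acyc S') hH.
  move/eqP; rewrite eq_sym subr_eq => /eqP ->.
  rewrite !IH //.
  rewrite [in RHS](bigID (fun mu : {set {set V}} => s \in mu)) /= addrC; congr (_ + _).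
    apply: eq_bigl => mu; rewrite /is_matching /S' subsetD1.
    by case: (mu \subset S); case: (s \in mu); case: (trivIset mu); case: (cover mu \subset A).
  rewrite [in RHS](reindex_onto (fun mu' => s |: mu') (fun mu => mu :\ s)); last first.
    by move=> mu /andP [_ smu]; rewrite setD1K.
  symmetry; apply: eq_big => mu'.
    case: (boolP (s \in mu')) => smu.
      have -> : ((s |: mu') :\ s == mu') = false.
        by apply/negbTE/negP => /eqP E; move: smu; rewrite -E !inE eqxx.
      by rewrite andbF /is_matching /S' [mu' \subset _]subsetD1 smu /= andbF.
    rewrite setU1K // eqxx setU11 !andbT /is_matching -!andbA.
    exact: match_ins.
  move=> /andP [_ /eqP E].
  have smu : s \notin mu' by rewrite -E !inE eqxx.
  congr (Dp x e _); apply/setP => y.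
  rewrite /cover big_setU1 /=; last exact: smu.
  rewrite s2 !inE.
  by case: (y == u); case: (y == v); case: (y \in A); case: (y \in \bigcup_(i in mu') i).
rewrite (@Dp_ext_in _ H); last first.
  move=> a b aA bA; rewrite hH.
  case: (H a b) => //=; apply/negP => /eqP E.
  move/negP: nuv; apply; apply/andP; split.
    by case/orP: (set2_in E) => /eqP ->.
  by case/orP: (set2_in (etrans E (setUC _ _))) => /eqP ->.
rewrite IH //; apply: eq_bigl => mu; apply/idP/idP.
  by rewrite /is_matching /S' subsetD1 => /andP [/andP [/andP [-> _] ->] ->].
case/andP => /andP [sub tri] cov.
have smu : s \notin mu.
  apply/negP => smu; move/negP: nuv; apply.
  have inc : forall y, y \in s -> y \in A.
    by move=> y ys; apply: (subsetP cov); apply/bigcupP; exists s.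
  by rewrite !inc // s2 !inE eqxx ?orbT.
by rewrite /is_matching /S' subsetD1 sub smu tri cov.
Qed.

End Main.

Unset Implicit Arguments.

Theorem lemma3p4 (R : comRingType) (V : finType) (e : rel V) (x : V -> R)
  (S : {set {set V}}) :
  is_tree e -> S \subset edge_set e ->
  dpoly (del_edges e S) x [set: V] =
  \sum_(mu : {set {set V}} | is_matching S mu) dpoly e x (~: cover mu).
Proof.
case=> [[esym eirr] _ eacyc] Se.
rewrite dpolyE (@main_gen R V x e esym eirr eacyc #|S|.+1 S [set: V] (ltnSn _) Se).
apply: eq_big => mu; first by rewrite subsetT andbT.
by move=> _; rewrite dpolyE setTD.
Qed.
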